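(* Let $M,N,p,r\ge1$. If at least one of $i$, $a$, $b$ has all its entries equal, then $(E_x)$ holds for all $x$. The normalized number of such triples, $$\alpha_p^r(M,N)=\frac{1}{M^{p+r}N^p}\#\{(i,a,b):\ i\text{ or }a\text{ or }b\text{ is constant}\},$$ equals $1-\frac{(M^p-M)(M^r-M)(N^p-N)}{M^{p+r}N^p}$, and $\alpha_p^r(M,N)=d_p^r(M,N)$ whenever $M=1$, or $N=1$, or $r=1$, or $p\le 2$.
   Context: For integers $M,N,p,r\ge1$, consider triples $(i,a,b)$ with $i=(i_1,\dots,i_r)\in\mathbb Z_M^r$, $a=(a_1,\dots,a_p)\in\mathbb Z_M^p$, $b=(b_1,\dots,b_p)\in\mathbb Z_N^p$, with cyclic conventions $i_{r+1}=i_1$, $b_{p+1}=b_1$. For $x\in\{1,\dots,r\}$, condition $(E_x)$ says that the multisets $\{(i_x+a_y,b_y),(i_{x+1}+a_y,b_{y+1}):y=1,\dots,p\}$ and $\{(i_x+a_y,b_{y+1}),(i_{x+1}+a_y,b_y):y=1,\dots,p\}$ of elements of $\mathbb Z_M\times\mathbb Z_N$ (counted with multiplicity) coincide. Define $d_p^r(M,N)=\frac{1}{M^{p+r}N^p}\#\{(i,a,b):(E_x)\text{ holds for all }x\}$. A tuple is called constant if all its entries are equal. *)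

(* Defs.v *)
From HB Require Import structures.
From mathcomp Require Import all_boot all_order all_algebra.
Set Implicit Arguments. Unset Strict Implicit. Unset Printing Implicit Defensive.
Import Order.TTheory GRing.Theory Num.Theory.

(* Z_M is represented by 'I_M (M >= 1, so M = 1 is allowed); addition in Z_M
   is addition of representatives followed by reduction mod M.  Elements of
   Z_M x Z_N are represented as pairs (nat * 'I_N), the first component being
   the reduced representative in {0,..,M-1}. *)

Definition addZ (M : nat) (u v : 'I_M) : nat := (u + v) %% M.

Definition triple (M N p r : nat) : finType :=
  ({ffun 'I_r -> 'I_M} * {ffun 'I_p -> 'I_M} * {ffun 'I_p -> 'I_N})%type.

(* The cyclic successor x+1 (with r+1 = 1) is ordS. *)
Definition multiset_lhs M N p r (i : {ffun 'I_r -> 'I_M}) (a : {ffun 'I_p -> 'I_M})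
  (b : {ffun 'I_p -> 'I_N}) (x : 'I_r) : seq (nat * 'I_N) :=
  flatten [seq [:: (addZ (i x) (a y), b y); (addZ (i (ordS x)) (a y), b (ordS y))]
          | y <- enum 'I_p].

Definition multiset_rhs M N p r (i : {ffun 'I_r -> 'I_M}) (a : {ffun 'I_p -> 'I_M})
  (b : {ffun 'I_p -> 'I_N}) (x : 'I_r) : seq (nat * 'I_N) :=
  flatten [seq [:: (addZ (i x) (a y), b (ordS y)); (addZ (i (ordS x)) (a y), b y)]
          | y <- enum 'I_p].

Definition cond_E M N p r i a b (x : 'I_r) : bool :=
  perm_eq (@multiset_lhs M N p r i a b x) (@multiset_rhs M N p r i a b x).

Definition all_E M N p r (t : triple M N p r) : bool :=
  [forall x : 'I_r, cond_E t.1.1 t.1.2 t.2 x].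

Definition constant_tuple (n : nat) (T : finType) (f : {ffun 'I_n -> T}) : bool :=
  [forall j : 'I_n, forall k : 'I_n, f j == f k].

Definition some_constant M N p r (t : triple M N p r) : bool :=
  [|| constant_tuple t.1.1, constant_tuple t.1.2 | constant_tuple t.2].

Local Open Scope ring_scope.

Definition d_pr (p r M N : nat) : rat :=
  (#|[set t : triple M N p r | all_E t]|)%:R / (M ^ (p + r) * N ^ p)%N%:R.

Definition alpha_pr (p r M N : nat) : rat :=
  (#|[set t : triple M N p r | some_constant t]|)%:R / (M ^ (p + r) * N ^ p)%N%:R.

(* Main.v *)
Require Import Defs.
From HB Require Import structures.
From mathcomp Require Import all_boot all_order all_algebra.
Import Order.TTheory GRing.Theory Num.Theory.

Lemma cnt (T : eqType) p (P : pred T) (f : 'I_p -> seq T) :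
  count P (flatten [seq f y | y <- enum 'I_p]) = (\sum_(y < p) count P (f y))%N.
Proof. rewrite count_flatten sumnE !big_map. by rewrite unlock. Qed.

Lemma sumS p (F : 'I_p -> nat) : (\sum_(y < p) F (ordS y) = \sum_(y < p) F y)%N.
Proof. by rewrite [RHS](reindex_inj (@ordS_inj p)). Qed.

Lemma condE_count M N p r i a b x :
  @cond_E M N p r i a b x <->
  forall P : pred (nat * 'I_N),
   (\sum_(y < p) (P (addZ (i x) (a y), b y) + P (addZ (i (ordS x)) (a y), b (ordS y))))%N
   = (\sum_(y < p) (P (addZ (i x) (a y), b (ordS y)) + P (addZ (i (ordS x)) (a y), b y)))%N.
Proof.
rewrite /cond_E; split.
  move/permP=> H P; move: (H P); rewrite /multiset_lhs /multiset_rhs !cnt /=.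
  by under eq_bigr do rewrite addn0; under [in X in _ = X -> _]eq_bigr do rewrite addn0.
move=> H; apply/permP=> P; rewrite /multiset_lhs /multiset_rhs !cnt /=.
under eq_bigr do rewrite addn0; under [RHS]eq_bigr do rewrite addn0; exact: H.
Qed.

Lemma part1 M N p r (t : triple M N p r) : some_constant t -> all_E t.
Proof.
case: t => [[i a] b] /=; rewrite /some_constant /all_E /=.
case/or3P => /forallP Hc; apply/forallP => x; apply/condE_count => P.
- have -> : i (ordS x) = i x by apply/eqP; move/forallP: (Hc (ordS x)) => /(_ x).
  by apply: eq_bigr => y _; rewrite addnC.
- have Ha : forall y, a y = a (ordS y) by move=> y; apply/eqP; move/forallP: (Hc y).
  rewrite !big_split /=; congr (_ + _).
    rewrite -(sumS _ (fun y => P (addZ (i x) (a y), b y))).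
    by apply: eq_bigr => y _; rewrite -Ha.
  rewrite -(sumS _ (fun y => P (addZ (i (ordS x)) (a y), b y))).
  by apply: eq_bigr => y _; rewrite -Ha.
- by apply: eq_bigr => y _; have /forallP/(_ y)/eqP-> := Hc (ordS y); rewrite addnC.
Qed.

Lemma val_iterS n (x : 'I_n) k : val (iter k (@ordS n) x) = (x + k) %% n.
Proof.
elim: k => [|k IH] /=; first by rewrite addn0 modn_small.
rewrite IH -[((x + k) %% n).+1]addn1 modnDml. by rewrite -addnA addn1.
Qed.

Lemma cyc_const n (T : finType) (f : {ffun 'I_n -> T}) :
  (forall x, f x = f (ordS x)) -> constant_tuple f.
Proof.
move=> H.
have Hk : forall k x, f x = f (iter k (@ordS n) x).
  by elim=> [|k IH] x //=; rewrite IH -H.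
apply/forallP => x; apply/forallP => y; apply/eqP.
rewrite (Hk (y + (n - x)) x); congr (f _); apply: val_inj.
rewrite val_iterS addnA [x + y]addnC -addnA subnKC; last exact: ltnW.
by rewrite modnDr modn_small.
Qed.

Lemma addZ_r M (u v w : 'I_M) : addZ u v = addZ u w -> v = w.
Proof.
by rewrite /addZ => /eqP; rewrite eqn_modDl !modn_small // => /eqP/val_inj.
Qed.

Lemma addZ_l M (u v w : 'I_M) : addZ u w = addZ v w -> u = v.
Proof.
by rewrite /addZ => /eqP; rewrite eqn_modDr !modn_small // => /eqP/val_inj.
Qed.

Arguments addZ_r {M u v w}.
Arguments addZ_l {M u v w}.

Lemma dom1_const (T : finType) (f : {ffun 'I_1 -> T}) : constant_tuple f.
Proof. by apply/forallP => j; apply/forallP => k; rewrite (ord1 j) (ord1 k). Qed.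

Lemma cod1_const n (f : {ffun 'I_n -> 'I_1}) : constant_tuple f.
Proof. by apply/forallP => j; apply/forallP => k; rewrite (ord1 (f j)) (ord1 (f k)). Qed.

Lemma I2_cases (y : 'I_2) : y = ord0 \/ y = ord_max.
Proof. by case: y => [[|[|k]] Hk]; [left|right|]; try apply: val_inj. Qed.

Lemma ordS0 : ordS (ord0 : 'I_2) = ord_max. Proof. exact: val_inj. Qed.
Lemma ordS1 : ordS (ord_max : 'I_2) = ord0. Proof. exact: val_inj. Qed.

Lemma const2 (T : finType) (f : {ffun 'I_2 -> T}) : f ord0 = f ord_max -> constant_tuple f.
Proof.
move=> E; apply/forallP => j; apply/forallP => k.
by case: (I2_cases j) => ->; case: (I2_cases k) => ->; rewrite ?E.
Qed.

Lemma part3 M N p r (t : triple M N p r) :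
  [\/ M = 1%N, N = 1%N, r = 1%N | (p <= 2)%N] -> (0 < p)%N ->
  all_E t -> some_constant t.
Proof.
case: t => [[i a] b]; rewrite /some_constant /all_E /=.
case => [HM|HN|Hr|Hp] Hp0 HE.
- by subst M; apply/or3P; apply: Or31; exact: cod1_const.
- by subst N; apply/or3P; apply: Or33; exact: cod1_const.
- by subst r; apply/or3P; apply: Or31; exact: dom1_const.
move: a b HE; case: p Hp Hp0 => [|[|[|p]]] // _ _ a b HE.
  by apply/or3P; apply: Or32; exact: dom1_const.
have [Eb|Nb] := eqVneq (b ord0) (b ord_max); first by apply/or3P; apply: Or33; exact: const2.
have [Ea|Na] := eqVneq (a ord0) (a ord_max); first by apply/or3P; apply: Or32; exact: const2.
rewrite cyc_const // => x.
move/forallP: HE => /(_ x); rewrite /cond_E => /perm_mem Hm.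
have : (addZ (i x) (a ord0), b ord0) \in multiset_rhs i a b x.
  rewrite -Hm; apply/flatten_mapP; exists ord0; first by rewrite mem_enum.
  by rewrite inE eqxx.
case/flatten_mapP => y _; case: (I2_cases y) => ->;
  rewrite ?ordS0 ?ordS1 !inE !xpair_eqE.
all: case/orP => /andP [/eqP E1 /eqP E2];
  solve [ exact: addZ_l E1 | by move: Nb; rewrite E2 eqxx | by move: Nb; rewrite -E2 eqxx
        | by move: Na; rewrite (addZ_r E1) eqxx ].
Qed.

Lemma card_const n (T : finType) : (0 < n)%N ->
  #|[set f : {ffun 'I_n -> T} | constant_tuple f]| = #|T|.
Proof.
move=> n0.
have -> : [set f : {ffun 'I_n -> T} | constant_tuple f] =
          (fun c : T => [ffun _ : 'I_n => c]) @: [set: T].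
  apply/setP => f; rewrite inE; apply/idP/imsetP.
    move/forallP=> H; exists (f (Ordinal n0)); first by rewrite inE.
    by apply/ffunP => j; rewrite ffunE; apply/eqP; move/forallP: (H j).
  by case=> c _ ->; apply/forallP => j; apply/forallP => k; rewrite !ffunE.
rewrite card_imset ?cardsT // => c d /ffunP /(_ (Ordinal n0)).
by rewrite !ffunE.
Qed.

Lemma card_nconst n (T : finType) : (0 < n)%N ->
  #|~: [set f : {ffun 'I_n -> T} | constant_tuple f]| = (#|T| ^ n - #|T|)%N.
Proof.
move=> n0; have := cardsC [set f : {ffun 'I_n -> T} | constant_tuple f].
by rewrite card_const // card_ffun card_ord => <-; rewrite addKn.
Qed.

Lemma card_some M N p r : (0 < p)%N -> (0 < r)%N ->
  #|[set t : triple M N p r | some_constant t]| =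
  (M ^ r * M ^ p * N ^ p - (M ^ r - M) * (M ^ p - M) * (N ^ p - N))%N.
Proof.
move=> p0 r0.
have -> : [set t : triple M N p r | some_constant t] =
   ~: setX (setX (~: [set f : {ffun 'I_r -> 'I_M} | constant_tuple f])
                 (~: [set f : {ffun 'I_p -> 'I_M} | constant_tuple f]))
           (~: [set f : {ffun 'I_p -> 'I_N} | constant_tuple f]).
  apply/setP => [[[i a] b]]; rewrite !inE /some_constant /=.
  by case: (constant_tuple i); case: (constant_tuple a); case: (constant_tuple b).
rewrite cardsCs setCK !cardsX !card_nconst // !card_ord.
by rewrite /triple !card_prod !card_ffun !card_ord.
Qed.

Local Open Scope ring_scope.

Lemma alpha_val M N p r : (0 < M)%N -> (0 < N)%N -> (0 < p)%N -> (0 < r)%N ->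
      alpha_pr p r M N =
        1 - ((M%:R ^+ p - M%:R) * (M%:R ^+ r - M%:R) * (N%:R ^+ p - N%:R))
              / (M%:R ^+ (p + r) * N%:R ^+ p).
Proof.
move=> M0 N0 p0 r0.
have le1 : forall K k, (0 < K)%N -> (0 < k)%N -> (K <= K ^ k)%N.
  by move=> K k K0 k0; rewrite -{1}(expn1 K) leq_pexp2l.
rewrite /alpha_pr card_some // natrB; last first.
  by rewrite !leq_mul ?leq_subr.
rewrite !natrM !natrB ?le1 // !natrX exprD.
have nz : (M%:R ^+ p * M%:R ^+ r * N%:R ^+ p : rat) != 0.
  by rewrite !mulf_neq0 // expf_neq0 // pnatr_eq0 -lt0n.
rewrite mulrBl [_ ^+ r * _ ^+ p]mulrC divff //; congr (_ - _ / _).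
by rewrite [(_ - _) * (_ - _)]mulrC.
Qed.

Theorem proposition3p3 (M N p r : nat) :
  (0 < M)%N -> (0 < N)%N -> (0 < p)%N -> (0 < r)%N ->
  [/\ (forall t : triple M N p r, some_constant t -> all_E t),
      alpha_pr p r M N =
        1 - ((M%:R ^+ p - M%:R) * (M%:R ^+ r - M%:R) * (N%:R ^+ p - N%:R))
              / (M%:R ^+ (p + r) * N%:R ^+ p)
    & [\/ M = 1%N, N = 1%N, r = 1%N | (p <= 2)%N] ->
        alpha_pr p r M N = d_pr p r M N].
Proof.
move=> M0 N0 p0 r0; split; first exact: part1.
  exact: alpha_val.
move=> H; rewrite /alpha_pr /d_pr; congr (_%:R / _).
apply: eq_card => t; rewrite !inE; apply/idP/idP; first exact: part1.
exact: part3.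
Qed.
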